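(* Assume that $T$ acts faithfully on $W$ and that $W$ is weakly symmetric. Let $\lambda\in Y(T)_{\mathbb R}$. Then $\Phi_\lambda$ is contained in $H_\lambda^\perp\subset Y(T)_{\mathbb R}$ and is homeomorphic to a sphere of dimension $\dim H_\lambda^\perp-1$ (i.e. to the unit sphere of $H_\lambda^\perp$; this is the empty set if $H_\lambda^\perp=0$).
   Context: $T$ is a torus over an algebraically closed field $k$ of characteristic $0$, with character group $X(T)$, cocharacter group $Y(T)$ and pairing $\langle\,,\rangle$ extended to $Y(T)_{\mathbb R}\times X(T)_{\mathbb R}\to\mathbb R$. $W$ is a $d$-dimensional $T$-representation with weights $\alpha_1,\dots,\alpha_d$. $W$ is weakly symmetric if for every line $\ell\subset X(T)_{\mathbb R}$ through $0$ the cone spanned by the $\alpha_i\in\ell$ is $\{0\}$ or $\ell$. Fix a positive definite quadratic form on $Y(T)_{\mathbb R}$ with norm $\|\cdot\|$ and let $B=\{\mu\in Y(T)_{\mathbb R}:\|\mu\|<1\}$. For $\lambda\in Y(T)_{\mathbb R}$ put $T_\lambda=\{i:\langle\lambda,\alpha_i\rangle<0\}$, $T^0_\lambda=\{i:\langle\lambda,\alpha_i\rangle=0\}$. Write $\lambda\sim\lambda'$ iff $T_\lambda=T_{\lambda'}$. Set $B_\lambda=\{\mu\in B:\mu\sim\lambda\}$, $\Phi_\lambda=\overline{B_\lambda}\setminus B_\lambda$, $H_\lambda=\operatorname{span}_{\mathbb R}\{\alpha_i:i\in T^0_\lambda\}\subset X(T)_{\mathbb R}$, and $H_\lambda^\perp=\{\mu\in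 Y(T)_{\mathbb R}:\langle\mu,h\rangle=0\ \forall h\in H_\lambda\}$. *)

(* Defs.v *)
From Stdlib Require Import Reals ZArith.
From mathcomp Require Import ssreflect ssrfun ssrbool eqtype ssrnat seq fintype bigop.

Set Implicit Arguments.
Unset Strict Implicit.

Local Open Scope R_scope.

(* T = G_m^n.  Y(T)_R = X(T)_R = R^n, represented as 'I_n -> R;
   X(T) = Z^n, represented as 'I_n -> Z. *)
Definition vec (n : nat) := 'I_n -> R.

Definition pairing (n : nat) (mu x : vec n) : R :=
  \big[Rplus/0]_(k < n) (mu k * x k).

Definition wR (n : nat) (a : 'I_n -> Z) : vec n := fun k => IZR (a k).

Definition lincomb (n d : nat) (alpha : 'I_d -> 'I_n -> Z) (c : 'I_d -> R) : vec n :=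
  fun k => \big[Rplus/0]_(i < d) (c i * IZR (alpha i k)).

(* Faithfulness of the action of T on W with weights alpha_i:
   the alpha_i generate the character lattice X(T) = Z^n as a group. *)
Definition faithful (n d : nat) (alpha : 'I_d -> 'I_n -> Z) : Prop :=
  forall x : 'I_n -> Z, exists c : 'I_d -> Z,
    forall k, x k = \big[Z.add/0%Z]_(i < d) (c i * alpha i k)%Z.

Definition on_line (n : nat) (v x : vec n) : Prop :=
  exists t : R, forall k, x k = t * v k.

Definition in_cone (n d : nat) (alpha : 'I_d -> 'I_n -> Z) (S : 'I_d -> Prop) (x : vec n) : Prop :=
  exists c : 'I_d -> R, (forall i, 0 <= c i) /\ (forall i, ~ S i -> c i = 0) /\
    (forall k, x k = lincomb alpha c k).

Definition in_span (n d : nat) (alpha : 'I_d -> 'I_n -> Z) (S : 'I_d -> Prop) (x : vec n) : Prop :=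
  exists c : 'I_d -> R, (forall i, ~ S i -> c i = 0) /\
    (forall k, x k = lincomb alpha c k).

Definition weakly_symmetric (n d : nat) (alpha : 'I_d -> 'I_n -> Z) : Prop :=
  forall v : vec n, (exists k, v k <> 0) ->
    let S := fun i => on_line v (wR (alpha i)) in
    (forall x, in_cone alpha S x <-> (forall k, x k = 0)) \/
    (forall x, in_cone alpha S x <-> on_line v x).

Definition qform (n : nat) (Q : 'I_n -> 'I_n -> R) (mu : vec n) : R :=
  \big[Rplus/0]_(k < n) \big[Rplus/0]_(l < n) (mu k * Q k l * mu l).

Definition pos_def_qform (n : nat) (Q : 'I_n -> 'I_n -> R) : Prop :=
  (forall k l, Q k l = Q l k) /\
  (forall mu : vec n, (exists k, mu k <> 0) -> 0 < qform Q mu).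

Definition qnorm (n : nat) (Q : 'I_n -> 'I_n -> R) (mu : vec n) : R := sqrt (qform Q mu).

Definition ball1 (n : nat) (Q : 'I_n -> 'I_n -> R) (mu : vec n) : Prop := qnorm Q mu < 1.

Definition Tneg (n d : nat) (alpha : 'I_d -> 'I_n -> Z) (lam : vec n) (i : 'I_d) : Prop :=
  pairing lam (wR (alpha i)) < 0.
Definition Tzero (n d : nat) (alpha : 'I_d -> 'I_n -> Z) (lam : vec n) (i : 'I_d) : Prop :=
  pairing lam (wR (alpha i)) = 0.

Definition equiv_lam (n d : nat) (alpha : 'I_d -> 'I_n -> Z) (lam lam' : vec n) : Prop :=
  forall i, Tneg alpha lam i <-> Tneg alpha lam' i.

Definition B_lam (n d : nat) (alpha : 'I_d -> 'I_n -> Z) (Q : 'I_n -> 'I_n -> R)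
  (lam mu : vec n) : Prop := ball1 Q mu /\ equiv_lam alpha mu lam.

(* Euclidean topology on R^n (all norms give the same topology) *)
Definition edist (n : nat) (u v : vec n) : R :=
  sqrt (\big[Rplus/0]_(k < n) ((u k - v k) * (u k - v k))).

Definition closure (n : nat) (A : vec n -> Prop) (x : vec n) : Prop :=
  forall eps, 0 < eps -> exists y, A y /\ edist x y < eps.

Definition Phi_lam (n d : nat) (alpha : 'I_d -> 'I_n -> Z) (Q : 'I_n -> 'I_n -> R)
  (lam mu : vec n) : Prop :=
  closure (B_lam alpha Q lam) mu /\ ~ B_lam alpha Q lam mu.

Definition Hperp (n d : nat) (alpha : 'I_d -> 'I_n -> Z) (lam mu : vec n) : Prop :=
  forall h, in_span alpha (Tzero alpha lam) h -> pairing mu h = 0.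

Definition unit_sphere_Hperp (n d : nat) (alpha : 'I_d -> 'I_n -> Z) (Q : 'I_n -> 'I_n -> R)
  (lam mu : vec n) : Prop := Hperp alpha lam mu /\ qnorm Q mu = 1.

Definition continuous_on (n m : nat) (A : vec n -> Prop) (f : vec n -> vec m) : Prop :=
  forall x, A x -> forall eps, 0 < eps -> exists delta, 0 < delta /\
    forall y, A y -> edist x y < delta -> edist (f x) (f y) < eps.

Definition homeomorphic (n : nat) (A B : vec n -> Prop) : Prop :=
  exists (f g : vec n -> vec n),
    (forall x, A x -> B (f x)) /\ (forall y, B y -> A (g y)) /\
    (forall x, A x -> g (f x) = x) /\ (forall y, B y -> f (g y) = y) /\
    continuous_on A f /\ continuous_on B g.

(* Main.v *)
From HB Require Import structures.
Require Import Defs.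
From Stdlib Require Import Reals ZArith Lra Classical FunctionalExtensionality.
From mathcomp Require Import ssreflect ssrfun ssrbool eqtype ssrnat seq fintype bigop.

Set Implicit Arguments.
Unset Strict Implicit.
Local Open Scope R_scope.

Lemma RplusA : associative Rplus. Proof. move=> a b c; by rewrite Rplus_assoc. Qed.
HB.instance Definition _ := Monoid.isComLaw.Build R 0 Rplus RplusA Rplus_comm Rplus_0_l.
HB.instance Definition _ := Monoid.isMulLaw.Build R 0 Rmult Rmult_0_l Rmult_0_r.
HB.instance Definition _ := Monoid.isAddLaw.Build R Rmult Rplus Rmult_plus_distr_r Rmult_plus_distr_l.

Lemma sum_ge0 (I : Type) (r : seq I) (P : pred I) (F : I -> R) :
  (forall i, 0 <= F i) -> 0 <= \big[Rplus/0]_(i <- r | P i) F i.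
Proof.
move=> H; elim/big_rec: _ => [|i x _ Hx]; first lra.
have := H i; lra.
Qed.

Lemma sum_le_const (I : Type) (r : seq I) (P : pred I) (F : I -> R) e :
  0 <= e -> (forall i, F i <= e) -> \big[Rplus/0]_(i <- r | P i) F i <= INR (size r) * e.
Proof.
move=> He H; elim: r => [|i r IH]; first by rewrite big_nil /=; lra.
rewrite big_cons; change (size (i::r)) with (size r).+1; rewrite S_INR.
case: (P i) => /=; have := H i; move: IH; nra.
Qed.

Lemma coord_le_edist (n : nat) (x y : vec n) k : Rabs (x k - y k) <= edist x y.
Proof.
rewrite /edist -sqrt_Rsqr_abs; apply: sqrt_le_1_alt.
rewrite (bigD1 k) //= /Rsqr.
rewrite -{1}[_ * _]Rplus_0_r; apply: Rplus_le_compat_l; apply: sum_ge0 => i; apply: Rle_0_sqr.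
Qed.

Definition cont (n : nat) (F : vec n -> R) (x : vec n) :=
  forall eps, 0 < eps -> exists del, 0 < del /\
    forall y, edist x y < del -> Rabs (F y - F x) < eps.

Lemma cont_ext n (F G : vec n -> R) x : cont F x -> (forall y, F y = G y) -> cont G x.
Proof.
move=> H E eps he; have [del [hd H']] := H eps he; exists del; split => // y hy.
rewrite -!E; by apply: H'.
Qed.

Lemma cont_const n (a : R) (x : vec n) : cont (fun _ => a) x.
Proof. move=> eps he; exists 1; split; first lra. move=> y _; rewrite Rminus_diag Rabs_R0; lra. Qed.

Lemma cont_coord n k (x : vec n) : cont (fun y => y k) x.
Proof.
move=> eps he; exists eps; split => // y hy.
have := coord_le_edist x y k; rewrite -Rabs_Ropp Ropp_minus_distr; lra.
Qed.

Lemma cont_add n (F G : vec n -> R) x : cont F x -> cont G x -> cont (fun y => F y + G y) x.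
Proof.
move=> HF HG eps he.
have [d1 [h1 H1]] := HF (eps/2) ltac:(lra).
have [d2 [h2 H2]] := HG (eps/2) ltac:(lra).
exists (Rmin d1 d2); split; first by apply: Rmin_pos.
move=> y hy.
have hy1 : edist x y < d1 by have := Rmin_l d1 d2; lra.
have hy2 : edist x y < d2 by have := Rmin_r d1 d2; lra.
have := H1 y hy1; have := H2 y hy2.
have -> : F y + G y - (F x + G x) = (F y - F x) + (G y - G x) by ring.
move=> a b; have := Rabs_triang (F y - F x) (G y - G x); lra.
Qed.

Lemma cont_comp n (F : vec n -> R) (g : R -> R) x :
  cont F x -> continuity_pt g (F x) -> cont (fun y => g (F y)) x.
Proof.
move=> HF Hg eps he.
have [alp [ha Ha]] := Hg eps he.
have [del [hd Hd]] := HF alp ha.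
exists del; split => // y hy.
case: (Req_dec (F y) (F x)) => E.
  by rewrite E Rminus_diag Rabs_R0.
apply: (Ha (F y)); split.
  by split => //; apply: not_eq_sym.
by apply: Hd.
Qed.

Lemma cpt_id x : continuity_pt (fun z => z) x.
Proof. apply: derivable_continuous_pt; apply: derivable_pt_id. Qed.

Lemma cont_scal n (F : vec n -> R) a x : cont F x -> cont (fun y => a * F y) x.
Proof.
move=> H; apply: (cont_comp (g := fun z => a * z)) => //.
have := continuity_pt_scal (fun z => z) a (F x) (cpt_id _).
by rewrite /mult_real_fct.
Qed.

Lemma cont_opp n (F : vec n -> R) x : cont F x -> cont (fun y => - F y) x.
Proof.
move=> H; apply: (cont_ext (F := fun y => -1 * F y)); first by apply: cont_scal.
move=> y; ring.
Qed.

Lemma cont_sub n (F G : vec n -> R) x : cont F x -> cont G x -> cont (fun y => F y - G y) x.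
Proof. move=> HF HG; apply: cont_add => //; by apply: cont_opp. Qed.

Lemma cont_sq n (F : vec n -> R) x : cont F x -> cont (fun y => F y * F y) x.
Proof.
move=> H; apply: (cont_comp (g := fun z => z * z)) => //.
have := continuity_pt_mult (fun z => z) (fun z => z) (F x) (cpt_id _) (cpt_id _).
by rewrite /mult_fct.
Qed.

Lemma cont_mul n (F G : vec n -> R) x : cont F x -> cont G x -> cont (fun y => F y * G y) x.
Proof.
move=> HF HG.
apply: (cont_ext (F := fun y => /4 * ((F y + G y) * (F y + G y) - (F y - G y) * (F y - G y)))).
  apply: cont_scal; apply: cont_sub; apply: cont_sq; [apply: cont_add|apply: cont_sub] => //.
move=> y; field.
Qed.

Lemma cont_inv n (F : vec n -> R) x : cont F x -> F x <> 0 -> cont (fun y => / F y) x.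
Proof.
move=> H hx; apply: (cont_comp (g := fun z => / z)) => //.
have := continuity_pt_inv (fun z => z) (F x) (cpt_id _) hx.
by rewrite /inv_fct.
Qed.

Lemma cont_sqrt n (F : vec n -> R) x : cont F x -> 0 <= F x -> cont (fun y => sqrt (F y)) x.
Proof. move=> H hx; apply: (cont_comp (g := sqrt)) => //; by apply: continuity_pt_sqrt. Qed.

Lemma cont_abs n (F : vec n -> R) x : cont F x -> cont (fun y => Rabs (F y)) x.
Proof. move=> H; apply: (cont_comp (g := Rabs)) => //; by apply: Rcontinuity_abs. Qed.

Lemma Rmin_form a b : Rmin a b = (a + b - Rabs (a - b)) / 2.
Proof. rewrite /Rmin; case: Rle_dec => h; [rewrite Rabs_left1|rewrite Rabs_right]; lra. Qed.
Lemma Rmax_form a b : Rmax a b = (a + b + Rabs (a - b)) / 2.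
Proof. rewrite /Rmax; case: Rle_dec => h; [rewrite Rabs_left1|rewrite Rabs_right]; lra. Qed.

Lemma cont_min n (F G : vec n -> R) x : cont F x -> cont G x -> cont (fun y => Rmin (F y) (G y)) x.
Proof.
move=> HF HG; apply: (cont_ext (F := fun y => /2 * (F y + G y - Rabs (F y - G y)))).
  apply: cont_scal; apply: cont_sub; [apply: cont_add|apply: cont_abs; apply: cont_sub] => //.
move=> y; rewrite Rmin_form; field.
Qed.

Lemma cont_max n (F G : vec n -> R) x : cont F x -> cont G x -> cont (fun y => Rmax (F y) (G y)) x.
Proof.
move=> HF HG; apply: (cont_ext (F := fun y => /2 * (F y + G y + Rabs (F y - G y)))).
  apply: cont_scal; apply: cont_add; [apply: cont_add|apply: cont_abs; apply: cont_sub] => //.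
move=> y; rewrite Rmax_form; field.
Qed.

Lemma cont_sum n (I : Type) (r : seq I) (P : pred I) (F : I -> vec n -> R) x :
  (forall i, cont (F i) x) -> cont (fun y => \big[Rplus/0]_(i <- r | P i) F i y) x.
Proof.
move=> H; elim: r => [|i r IH].
  apply: (cont_ext (F := fun _ => 0)); first by apply: cont_const.
  by move=> y; rewrite big_nil.
case E: (P i).
  apply: (cont_ext (F := fun y => F i y + \big[Rplus/0]_(j <- r | P j) F j y)).
    by apply: cont_add.
  by move=> y; rewrite big_cons E.
apply: (cont_ext (F := fun y => \big[Rplus/0]_(j <- r | P j) F j y)) => //.
by move=> y; rewrite big_cons E.
Qed.

Lemma fin_delta (T : eqType) (r : seq T) (Pk : T -> R -> Prop) :
  (forall k, exists del, 0 < del /\ Pk k del) ->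
  (forall k del del', 0 < del' -> del' <= del -> Pk k del -> Pk k del') ->
  exists del, 0 < del /\ forall k, k \in r -> Pk k del.
Proof.
move=> H Hm; elim: r => [|k r [del [hd IH]]].
  exists 1; split; [lra| by []].
have [d1 [h1 H1]] := H k.
exists (Rmin del d1); split; first by apply: Rmin_pos.
move=> j; rewrite in_cons => /orP [/eqP ->|hj].
  apply: (Hm k d1) => //; [by apply: Rmin_pos | by apply: Rmin_r].
apply: (Hm j del) => //; [by apply: Rmin_pos | by apply: Rmin_l | by apply: IH].
Qed.

Lemma cont_vec n (f : vec n -> vec n) x :
  (forall k, cont (fun y => f y k) x) ->
  forall eps, 0 < eps -> exists del, 0 < del /\
    forall y, edist x y < del -> edist (f x) (f y) < eps.
Proof.
move=> H eps he.
set M := INR (size (index_enum 'I_n)).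
have hM : 0 <= M by apply: pos_INR.
set e := eps / sqrt (M + 1).
have hs : 0 < sqrt (M + 1) by apply: sqrt_lt_R0; lra.
have he' : 0 < e by apply: Rdiv_lt_0_compat.
have [del [hd Hd]] := @fin_delta _ (index_enum 'I_n)
   (fun k del => forall y, edist x y < del -> Rabs (f y k - f x k) < e)
   (fun k => H k e he')
   ltac:(move=> k d d' _ hdd Hk y hy; apply: Hk; lra).
exists del; split => // y hy.
rewrite /edist.
have Hb : \big[Rplus/0]_(k < n) ((f x k - f y k) * (f x k - f y k)) <= M * (e * e).
  apply: sum_le_const; first nra.
  move=> k; have := Hd k (mem_index_enum k) y hy.
  rewrite -Rabs_Ropp Ropp_minus_distr => h.
  have h0 := Rabs_pos (f x k - f y k).
  have E := Rsqr_abs (f x k - f y k); rewrite /Rsqr in E; rewrite E; nra.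
have Hee : M * (e * e) < eps * eps.
  have -> : e * e = eps * eps / (M + 1).
    have hss := sqrt_sqrt (M+1) ltac:(lra).
    move: hss hs; rewrite /e; set s := sqrt (M+1) => hss hs.
    rewrite -hss; field; lra.
  have : 0 < eps * eps by nra.
  move=> h; apply: (Rmult_lt_reg_r (M+1)); first lra.
  field_simplify; lra.
rewrite -(sqrt_square eps); last lra.
apply: sqrt_lt_1_alt; split; last lra.
apply: sum_ge0 => k; apply: Rle_0_sqr.
Qed.

Lemma sum_add (I : Type) (r : seq I) (P : pred I) (F G : I -> R) :
  \big[Rplus/0]_(i <- r | P i) (F i + G i) =
  \big[Rplus/0]_(i <- r | P i) F i + \big[Rplus/0]_(i <- r | P i) G i.
Proof. by rewrite big_split. Qed.

Lemma sum_scal (I : Type) (r : seq I) (P : pred I) (F : I -> R) a :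
  \big[Rplus/0]_(i <- r | P i) (a * F i) = a * \big[Rplus/0]_(i <- r | P i) F i.
Proof. by rewrite big_distrr. Qed.

Lemma sum_zero (I : Type) (r : seq I) (P : pred I) (F : I -> R) :
  (forall i, F i = 0) -> \big[Rplus/0]_(i <- r | P i) F i = 0.
Proof. move=> H; rewrite big1 //. Qed.

Lemma pairing_lin1 n (u v x : vec n) a b :
  pairing (fun k => a * u k + b * v k) x = a * pairing u x + b * pairing v x.
Proof.
rewrite /pairing -!sum_scal -sum_add; apply: eq_bigr => k _; ring.
Qed.

Lemma pairing_ext n (u v x : vec n) : (forall k, u k = v k) -> pairing u x = pairing v x.
Proof. move=> H; rewrite /pairing; apply: eq_bigr => k _; by rewrite H. Qed.

Lemma pairing_ext2 n (u x y : vec n) : (forall k, x k = y k) -> pairing u x = pairing u y.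
Proof. move=> H; rewrite /pairing; apply: eq_bigr => k _; by rewrite H. Qed.

Lemma pairing_scal2 n (u x : vec n) t : pairing u (fun k => t * x k) = t * pairing u x.
Proof. rewrite /pairing -sum_scal; apply: eq_bigr => k _; ring. Qed.

Lemma pairing_lincomb n d (alpha : 'I_d -> 'I_n -> Z) (mu : vec n) c :
  pairing mu (lincomb alpha c) = \big[Rplus/0]_(i < d) (c i * pairing mu (wR (alpha i))).
Proof.
rewrite /pairing /lincomb.
have -> : \big[Rplus/0]_(k < n) (mu k * \big[Rplus/0]_(i < d) (c i * IZR (alpha i k))) =
   \big[Rplus/0]_(k < n) \big[Rplus/0]_(i < d) (c i * (mu k * IZR (alpha i k))).
  apply: eq_bigr => k _; rewrite -sum_scal; apply: eq_bigr => i _; ring.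
rewrite exchange_big; apply: eq_bigr => i _; rewrite -sum_scal; apply: eq_bigr => k _.
by rewrite /wR.
Qed.

Lemma lincomb_ind n d (alpha : 'I_d -> 'I_n -> Z) i k :
  lincomb alpha (fun j => if j == i then 1 else 0) k = IZR (alpha i k).
Proof.
rewrite /lincomb (bigD1 i) //= eqxx big1; first ring.
by move=> j /negbTE ->; ring.
Qed.

Definition beta n (Q : 'I_n -> 'I_n -> R) (a v : vec n) : R :=
  \big[Rplus/0]_(k < n) \big[Rplus/0]_(l < n) (a k * Q k l * v l + v k * Q k l * a l).

Lemma qform_expand n (Q : 'I_n -> 'I_n -> R) (a v : vec n) t :
  qform Q (fun k => a k + t * v k) = qform Q a + t * beta Q a v + t * t * qform Q v.
Proof.
rewrite /qform /beta -!sum_scal -!sum_add; apply: eq_bigr => k _.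
rewrite -!sum_scal -!sum_add; apply: eq_bigr => l _; ring.
Qed.

Lemma qform_ext n (Q : 'I_n -> 'I_n -> R) (u v : vec n) :
  (forall k, u k = v k) -> qform Q u = qform Q v.
Proof. move=> H; rewrite /qform; apply: eq_bigr => k _; apply: eq_bigr => l _; by rewrite !H. Qed.

Lemma qform_zero n (Q : 'I_n -> 'I_n -> R) : qform Q (fun _ => 0) = 0.
Proof. rewrite /qform sum_zero // => k; rewrite sum_zero // => l; ring. Qed.

Lemma qform_scal n (Q : 'I_n -> 'I_n -> R) (v : vec n) t :
  qform Q (fun k => t * v k) = t * t * qform Q v.
Proof.
rewrite (@qform_ext _ _ _ (fun k => (fun _ => 0) k + t * v k)); last by move=> k; ring.
rewrite qform_expand qform_zero.
have -> : beta Q (fun _ => 0) v = 0.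
  rewrite /beta sum_zero // => k; rewrite sum_zero // => l; ring.
ring.
Qed.

Lemma cont_pairing n (x : vec n) (mu : vec n) : cont (fun y => pairing y x) mu.
Proof.
rewrite /pairing; apply: cont_sum => k; apply: cont_mul; [apply: cont_coord|apply: cont_const].
Qed.

Lemma cont_qform n (Q : 'I_n -> 'I_n -> R) (mu : vec n) : cont (fun y => qform Q y) mu.
Proof.
rewrite /qform; apply: cont_sum => k; apply: cont_sum => l.
apply: cont_mul; [apply: cont_mul; [apply: cont_coord|apply: cont_const]|apply: cont_coord].
Qed.

Lemma cont_beta n (Q : 'I_n -> 'I_n -> R) (a : vec n) (mu : vec n) : cont (fun y => beta Q a y) mu.
Proof.
rewrite /beta; apply: cont_sum => k; apply: cont_sum => l.
apply: cont_add; apply: cont_mul; try apply: cont_mul; try apply: cont_coord; apply: cont_const.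
Qed.

Lemma qform_ge0 n (Q : 'I_n -> 'I_n -> R) (mu : vec n) : pos_def_qform Q -> 0 <= qform Q mu.
Proof.
move=> [_ hQ]; case: (classic (exists k, mu k <> 0)) => h.
  by apply: Rlt_le; apply: hQ.
rewrite (@qform_ext _ _ _ (fun _ => 0)); first by rewrite qform_zero; lra.
move=> k; apply: NNPP => hk; apply: h; by exists k.
Qed.

Lemma pairing_scal1 n (u x : vec n) t : pairing (fun k => t * u k) x = t * pairing u x.
Proof. rewrite /pairing -sum_scal; apply: eq_bigr => k _; ring. Qed.

Lemma qnorm_lt1 n (Q : 'I_n -> 'I_n -> R) (mu : vec n) : pos_def_qform Q ->
  (qnorm Q mu < 1 <-> qform Q mu < 1).
Proof.
move=> hQ; have h0 := qform_ge0 mu hQ; rewrite /qnorm; split => h.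
  case: (Rlt_le_dec (qform Q mu) 1) => // h1.
  have := sqrt_le_1_alt _ _ h1; rewrite sqrt_1; lra.
rewrite -sqrt_1; apply: sqrt_lt_1_alt; lra.
Qed.

Lemma qnorm_eq1 n (Q : 'I_n -> 'I_n -> R) (mu : vec n) : pos_def_qform Q ->
  (qnorm Q mu = 1 <-> qform Q mu = 1).
Proof.
move=> hQ; have h0 := qform_ge0 mu hQ; rewrite /qnorm; split => h.
  by rewrite -(sqrt_sqrt (qform Q mu)) // h; ring.
by rewrite h sqrt_1.
Qed.

Section Main.
Variables (n d : nat) (alpha : 'I_d -> 'I_n -> Z) (Q : 'I_n -> 'I_n -> R) (lam : vec n).
Hypothesis hws : weakly_symmetric alpha.
Hypothesis hQ : pos_def_qform Q.

Local Notation P i mu := (pairing mu (wR (alpha i))).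

Lemma P_zero i mu : ~ (exists k, IZR (alpha i k) <> 0) -> P i mu = 0.
Proof.
move=> h; rewrite /pairing sum_zero // => k.
have -> : wR (alpha i) k = 0 by apply: NNPP => hk; apply: h; exists k.
ring.
Qed.

Lemma ws_opp i : (exists k, IZR (alpha i k) <> 0) ->
  exists j t, t < 0 /\ forall mu, P j mu = t * P i mu.
Proof.
move=> [k0 hk0].
set v := wR (alpha i).
have hv : exists k, v k <> 0 by exists k0.
have Si : on_line v (wR (alpha i)) by exists 1 => k; rewrite /v; ring.
case: (hws hv) => [H|H].
  exfalso; apply: hk0.
  have : in_cone alpha (fun j => on_line v (wR (alpha j))) (wR (alpha i)).
    exists (fun j => if j == i then 1 else 0); split; last split.
    - move=> j; case: (j == i); lra.
    - move=> j hj; case E: (j == i) => //; move/eqP: E => E; subst j; by case: hj.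
    - by move=> k; rewrite lincomb_ind.
  move/H => /(_ k0); by rewrite /wR.
have : on_line v (fun k => - v k) by exists (-1) => k; ring.
move/H => [c [hc0 [hcS hc]]].
apply: NNPP => hno.
have key : forall j, 0 <= c j * (IZR (alpha j k0) * v k0).
  move=> j; case: (classic (on_line v (wR (alpha j)))) => hj; last by rewrite hcS //; lra.
  case: hj => t ht.
  have ht0 : 0 <= t.
    case: (Rle_lt_dec 0 t) => // htn; exfalso; apply: hno; exists j, t; split => // mu.
    rewrite (@pairing_ext2 _ mu _ (fun k => t * v k)) //.
    by rewrite pairing_scal2.
  have := ht k0; rewrite /wR => ->.
  have := hc0 j; have : 0 <= v k0 * v k0 by apply: Rle_0_sqr.
  move=> a b; have : 0 <= t * (v k0 * v k0) by apply: Rmult_le_pos.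
  move=> e; have -> : c j * (t * v k0 * v k0) = c j * (t * (v k0 * v k0)) by ring.
  by apply: Rmult_le_pos.
have hsum : 0 <= \big[Rplus/0]_(j < d) (c j * (IZR (alpha j k0) * v k0)) by apply: sum_ge0.
have e := hc k0; rewrite /lincomb in e.
have : \big[Rplus/0]_(j < d) (c j * (IZR (alpha j k0) * v k0)) = - v k0 * v k0.
  rewrite e big_distrl /=; apply: eq_bigr => j _; ring.
have : 0 < v k0 * v k0 by apply: Rsqr_pos_lt.
lra.
Qed.

Definition Zc (mu : vec n) := forall i, P i lam = 0 -> P i mu = 0.
Definition Kset (mu : vec n) := Zc mu /\ qform Q mu <= 1 /\ (forall i, P i lam < 0 -> P i mu <= 0).
Definition Bs (mu : vec n) := qform Q mu < 1 /\ Zc mu /\ (forall i, P i lam < 0 -> P i mu < 0).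

Lemma B_iff mu : B_lam alpha Q lam mu <-> Bs mu.
Proof.
rewrite /B_lam /ball1 qnorm_lt1 // /equiv_lam /Tneg /Bs /Zc.
split.
  move=> [hq he]; split => //; split; last by move=> i /he.
  move=> i hi.
  case: (Rtotal_order (P i mu) 0) => [h|[h|h]] //.
    have := proj1 (he i) h; lra.
  case: (classic (exists k, IZR (alpha i k) <> 0)) => hnz; last by apply: P_zero.
  have [j [t [ht hj]]] := ws_opp hnz.
  have : P j mu < 0 by rewrite hj; nra.
  move/(proj1 (he j)); rewrite hj hi; lra.
move=> [hq [hz hn]]; split => // i; split; last by apply: hn.
move=> h; case: (Rtotal_order (P i lam) 0) => [h'|[h'|h']] //.
  by have := hz i h'; lra.
case: (classic (exists k, IZR (alpha i k) <> 0)) => hnz; last by have := P_zero mu hnz; lra.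
have [j [t [ht hj]]] := ws_opp hnz.
have : P j lam < 0 by rewrite hj; nra.
move/hn; rewrite hj; nra.
Qed.

Lemma Z_Hperp mu : Zc mu <-> Hperp alpha lam mu.
Proof.
split.
  move=> hz h [c [hc hh]].
  rewrite (@pairing_ext2 _ mu _ (lincomb alpha c)) // pairing_lincomb sum_zero // => i.
  case: (classic (Tzero alpha lam i)) => hi; first by rewrite hz //; ring.
  by rewrite hc //; ring.
move=> hp i hi.
apply: hp; exists (fun j => if j == i then 1 else 0); split.
  move=> j hj; case E: (j == i) => //; move/eqP: E => E; subst j; by case: hj.
by move=> k; rewrite lincomb_ind.
Qed.

Definition sc := / (1 + qform Q lam).
Definition cc : vec n := fun k => sc * lam k.

Lemma sc_pos : 0 < sc /\ sc <= 1.
Proof.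
have := qform_ge0 lam hQ => h; rewrite /sc; split.
  apply: Rinv_0_lt_compat; lra.
rewrite -Rinv_1; apply: Rinv_le_contravar; lra.
Qed.

Lemma P_cc i : P i cc = sc * P i lam.
Proof. by rewrite pairing_scal1. Qed.

Lemma q_cc : qform Q cc < 1.
Proof.
rewrite /cc qform_scal.
have := qform_ge0 lam hQ => h; have [h1 h2] := sc_pos.
have : sc * (1 + qform Q lam) = 1 by rewrite /sc; field; lra.
nra.
Qed.

Lemma Bs_cc : Bs cc.
Proof.
have [h1 h2] := sc_pos.
split; first by apply: q_cc.
split; first by move=> i hi; rewrite P_cc hi; ring.
move=> i hi; rewrite P_cc; nra.
Qed.

Lemma P_aff (x y : vec n) t i : P i (fun k => x k + t * y k) = P i x + t * P i y.
Proof.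
rewrite (@pairing_ext _ _ (fun k => 1 * x k + t * y k)); last by move=> k; ring.
by rewrite pairing_lin1; ring.
Qed.

Lemma star x t : Kset x -> 0 < t <= 1 -> Bs (fun k => x k + t * (cc k - x k)).
Proof.
move=> [hz [hq hn]] ht.
have hP : forall i, P i (fun k => x k + t * (cc k - x k)) = (1 - t) * P i x + t * P i cc.
  move=> i; rewrite P_aff (@pairing_ext _ (fun k => cc k - x k) (fun k => cc k + (-1) * x k)).
    rewrite P_aff; ring.
  move=> k; ring.
have hqc := q_cc.
have hq0 := qform_ge0 (fun k => cc k - x k) hQ.
have E1 := qform_expand Q x (fun k => cc k - x k) t.
have E2 := qform_expand Q x (fun k => cc k - x k) 1.
rewrite (@qform_ext _ _ (fun k => x k + 1 * (cc k - x k)) cc) in E2; last by move=> k; ring.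
split.
  have hb : beta Q x (fun k => cc k - x k) = qform Q cc - qform Q x - qform Q (fun k => cc k - x k) by lra.
  rewrite E1 hb.
  have h1 : 0 <= t * (1 - t) * qform Q (fun k => cc k - x k) by apply: Rmult_le_pos; nra.
  have h2 : (1 - t) * qform Q x <= 1 - t by nra.
  have h3 : t * qform Q cc < t by nra.
  nra.
split.
  by move=> i hi; rewrite hP P_cc hi (hz i hi); ring.
move=> i hi; rewrite hP P_cc; have := hn i hi; have [h1 h2] := sc_pos => h3.
have h4 : 0 < t * sc by nra.
have h5 : t * sc * P i lam < 0 by nra.
have h6 : (1 - t) * P i x <= 0 by nra.
nra.
Qed.

Lemma edist_seg (x : vec n) t : 0 <= t ->
  edist x (fun k => x k + t * (cc k - x k)) = t * edist x cc.
Proof.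
move=> ht; rewrite /edist.
rewrite -[X in X * _](sqrt_square t) // -sqrt_mult; first last.
- apply: sum_ge0 => k; apply: Rle_0_sqr.
- nra.
congr sqrt; rewrite -sum_scal; apply: eq_bigr => k _; ring.
Qed.

Lemma closure_iff mu : closure (B_lam alpha Q lam) mu <-> Kset mu.
Proof.
split.
  move=> hc; split; last split.
  - move=> i hi; apply: NNPP => hne.
    have hp : 0 < Rabs (P i mu) by apply: Rabs_pos_lt.
    have [del [hd Hd]] := cont_pairing (wR (alpha i)) mu hp.
    have [y [hy1 hy2]] := hc del hd; move/B_iff: hy1 => [_ [hy _]].
    have := Hd y hy2; rewrite (hy i hi) Rminus_0_l Rabs_Ropp; lra.
  - apply: Rnot_lt_le => hne.
    have hp : 0 < qform Q mu - 1 by lra.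
    have [del [hd Hd]] := cont_qform Q mu hp.
    have [y [hy1 hy2]] := hc del hd; move/B_iff: hy1 => [hy _].
    have := Hd y hy2 => h; have := Rle_abs (qform Q y - qform Q mu); have := Rabs_Ropp (qform Q y - qform Q mu); have := Rle_abs (- (qform Q y - qform Q mu)). lra.
  - move=> i hi; apply: Rnot_lt_le => hne.
    have [del [hd Hd]] := cont_pairing (wR (alpha i)) mu hne.
    have [y [hy1 hy2]] := hc del hd; move/B_iff: hy1 => [_ [_ hy]].
    have := Hd y hy2 => h; have := hy i hi => h2.
    have := Rabs_Ropp (P i y - P i mu); have := Rle_abs (- (P i y - P i mu)). lra.
move=> hk eps he.
set E := edist mu cc.
have hE : 0 <= E by rewrite /E /edist; apply: sqrt_pos.
set t := Rmin 1 (eps / (2 * (E + 1))).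
have ht0 : 0 < t.
  apply: Rmin_pos; first lra; apply: Rdiv_lt_0_compat; lra.
have ht1 : t <= 1 by apply: Rmin_l.
have ht2 : t <= eps / (2 * (E + 1)) by apply: Rmin_r.
exists (fun k => mu k + t * (cc k - mu k)); split.
  by apply/B_iff; apply: star.
rewrite edist_seg; last lra.
change (t * E < eps).
have hw : eps / (2 * (E + 1)) * (E + 1) = eps / 2 by field; lra.
have hw0 : 0 < eps / (2 * (E + 1)) by apply: Rdiv_lt_0_compat; lra.
have h1 : t * E <= eps / (2 * (E + 1)) * E by apply: Rmult_le_compat_r.
have hw' : eps / (2 * (E + 1)) * E + eps / (2 * (E + 1)) = eps / 2 by rewrite -hw; ring.
lra.
Qed.

Lemma Phi_iff mu : Phi_lam alpha Q lam mu <-> Kset mu /\ ~ Bs mu.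
Proof.
rewrite /Phi_lam closure_iff; split; move=> [h1 h2]; split => //; move=> h; apply: h2; by apply/B_iff.
Qed.

Definition a0 := qform Q cc.
Definition bt (u : vec n) := beta Q cc u.
Definition Dd (u : vec n) := sqrt (bt u * bt u + 4 * (1 - a0)).
Definition rB (u : vec n) := / 2 * (- bt u + Dd u).
Definition Ai i := - P i cc.
Definition ri i (u : vec n) :=
  if Rlt_dec (P i lam) 0 then Ai i * / Rmax (P i u) (Ai i * / rB u) else rB u.
Definition rho (u : vec n) := foldr (fun i acc => Rmin (ri i u) acc) (rB u) (index_enum 'I_d).

Lemma a0_lt : a0 < 1.
Proof. exact: q_cc. Qed.

Lemma Dd_prop u : Rabs (bt u) < Dd u /\ Dd u * Dd u = bt u * bt u + 4 * (1 - a0).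
Proof.
have ha := a0_lt; split.
  rewrite -sqrt_Rsqr_abs /Dd; apply: sqrt_lt_1_alt; split; first by apply: Rle_0_sqr.
  rewrite /Rsqr; lra.
rewrite /Dd sqrt_sqrt //; have := Rle_0_sqr (bt u); rewrite /Rsqr; lra.
Qed.

Lemma rB_pos u : 0 < rB u.
Proof.
have [h _] := Dd_prop u; have := Rle_abs (bt u); rewrite /rB; lra.
Qed.

Lemma q_line u t : qform Q u = 1 -> qform Q (fun k => cc k + t * u k) = a0 + t * bt u + t * t.
Proof. move=> hu; rewrite qform_expand hu /a0 /bt; ring. Qed.

Lemma q_line_le u t : qform Q u = 1 -> 0 <= t ->
  (t <= rB u -> qform Q (fun k => cc k + t * u k) <= 1) /\
  (t < rB u -> qform Q (fun k => cc k + t * u k) < 1).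
Proof.
move=> hu ht; rewrite q_line //.
have [h1 h2] := Dd_prop u.
have h3 := Rle_abs (- bt u); rewrite Rabs_Ropp in h3.
have E : a0 + t * bt u + t * t - 1 = (t - rB u) * (t + rB u + bt u).
  rewrite /rB; have : a0 = 1 - (Dd u * Dd u - bt u * bt u) / 4 by rewrite h2; field.
  move=> ->; field.
have hp : 0 < t + rB u + bt u by rewrite /rB; lra.
split => h.
  have : (t - rB u) * (t + rB u + bt u) <= 0.
    have : 0 <= (rB u - t) * (t + rB u + bt u) by apply: Rmult_le_pos; lra.
    lra.
  lra.
have : (t - rB u) * (t + rB u + bt u) < 0.
  apply: Rmult_neg_pos; lra.
lra.
Qed.

Lemma Ai_pos i : P i lam < 0 -> 0 < Ai i.
Proof. move=> h; rewrite /Ai P_cc; have [h1 _] := sc_pos; nra. Qed.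

Lemma ri_pos i u : 0 < ri i u /\ ri i u <= rB u.
Proof.
have hB := rB_pos u.
rewrite /ri; case: Rlt_dec => h /=; last by split; lra.
have hA := Ai_pos h.
have hq : 0 < Ai i * / rB u by apply: Rmult_lt_0_compat => //; apply: Rinv_0_lt_compat.
have hm := Rmax_r (P i u) (Ai i * / rB u).
have hm0 : 0 < Rmax (P i u) (Ai i * / rB u) by lra.
split; first by apply: Rmult_lt_0_compat => //; apply: Rinv_0_lt_compat.
have : Ai i * / Rmax (P i u) (Ai i * / rB u) <= Ai i * / (Ai i * / rB u).
  apply: Rmult_le_compat_l; first lra.
  by apply: Rinv_le_contravar.
have -> : Ai i * / (Ai i * / rB u) = rB u by field; lra.
done.
Qed.

Lemma ri_prop i u t : P i lam < 0 -> 0 <= t ->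
  (t <= ri i u -> P i (fun k => cc k + t * u k) <= 0) /\
  (t < ri i u -> P i (fun k => cc k + t * u k) < 0).
Proof.
move=> h ht; rewrite P_aff.
have hB := rB_pos u; have hA := Ai_pos h.
have hq : 0 < Ai i * / rB u by apply: Rmult_lt_0_compat => //; apply: Rinv_0_lt_compat.
have hm := Rmax_r (P i u) (Ai i * / rB u).
have hm1 := Rmax_l (P i u) (Ai i * / rB u).
set m := Rmax (P i u) (Ai i * / rB u) in hm hm1 *.
have hm0 : 0 < m by lra.
have Ec : P i cc = - Ai i by rewrite /Ai; ring.
rewrite Ec /ri; case: Rlt_dec => // _ /=; fold m.
have E : Ai i * / m * m = Ai i by field; lra.
split => h2.
  have : t * m <= Ai i * / m * m by apply: Rmult_le_compat_r; lra.
  have : t * P i u <= t * m by apply: Rmult_le_compat_l.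
  lra.
have : t * m < Ai i * / m * m by apply: Rmult_lt_compat_r.
have : t * P i u <= t * m by apply: Rmult_le_compat_l.
lra.
Qed.

Lemma ri_bd i u : P i lam < 0 -> ri i u = rB u \/ P i (fun k => cc k + ri i u * u k) = 0.
Proof.
move=> h.
have hB := rB_pos u; have hA := Ai_pos h.
have hq : 0 < Ai i * / rB u by apply: Rmult_lt_0_compat => //; apply: Rinv_0_lt_compat.
rewrite P_aff /ri; case: Rlt_dec => // _ /=.
have Ec : P i cc = - Ai i by rewrite /Ai; ring.
rewrite Ec /Rmax; case: Rle_dec => h2.
  left; field; lra.
right; field; lra.
Qed.

Lemma fold_props (G : 'I_d -> R) b (l : seq 'I_d) :
  let m := foldr (fun i acc => Rmin (G i) acc) b l in
  m <= b /\ (forall i, i \in l -> m <= G i) /\ (m = b \/ exists i, m = G i) /\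
  (0 < b -> (forall i, 0 < G i) -> 0 < m).
Proof.
elim: l => [|j l IH] /=.
  split; first lra; split; first by []; split; first by left. done.
case: IH => [h1 [h2 [h3 h4]]].
set m := foldr _ b l in h1 h2 h3 h4 *.
split; first by have := Rmin_r (G j) m; lra.
split.
  move=> i; rewrite in_cons => /orP [/eqP ->|hi]; first by apply: Rmin_l.
  have := Rmin_r (G j) m; have := h2 i hi; lra.
split.
  rewrite /Rmin; case: Rle_dec => _; first by right; exists j.
  done.
move=> hb hG; apply: Rmin_pos; [by apply: hG | by apply: h4].
Qed.

Lemma rho_props u : 0 < rho u /\ rho u <= rB u /\ (forall i, rho u <= ri i u) /\
  (rho u = rB u \/ exists i, rho u = ri i u).
Proof.
have [h1 [h2 [h3 h4]]] := fold_props (fun i => ri i u) (rB u) (index_enum 'I_d).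
rewrite /rho; split; first by apply: h4; [apply: rB_pos| move=> i; case: (ri_pos i u)].
split => //; split => //.
move=> i; apply: h2; apply: mem_index_enum.
Qed.

Definition Sph (u : vec n) := Zc u /\ qform Q u = 1.

Lemma Zc_line u t : Zc u -> Zc (fun k => cc k + t * u k).
Proof.
move=> hu i hi; rewrite P_aff P_cc hi (hu i hi); ring.
Qed.

Lemma line_B u t : Sph u -> 0 <= t < rho u -> Bs (fun k => cc k + t * u k).
Proof.
move=> [hz hq] [ht0 ht].
have [_ [hr1 [hr2 _]]] := rho_props u.
split; first by apply: (proj2 (q_line_le hq ht0)); lra.
split; first by apply: Zc_line.
move=> i hi; apply: (proj2 (ri_prop u hi ht0)); have := hr2 i; lra.
Qed.

Lemma line_K u : Sph u -> Kset (fun k => cc k + rho u * u k).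
Proof.
move=> [hz hq].
have [hp [hr1 [hr2 _]]] := rho_props u.
split; first by apply: Zc_line.
split; first by apply: (proj1 (q_line_le hq (Rlt_le _ _ hp))).
move=> i hi; by apply: (proj1 (ri_prop u hi (Rlt_le _ _ hp))).
Qed.

Lemma line_notB u : Sph u -> ~ Bs (fun k => cc k + rho u * u k).
Proof.
move=> [hz hq] [hb1 [_ hb3]].
have [hp [hr1 [hr2 hr3]]] := rho_props u.
have hqB : qform Q (fun k => cc k + rB u * u k) = 1.
  rewrite q_line //.
  have [_ h2] := Dd_prop u.
  rewrite /rB; have : a0 = 1 - (Dd u * Dd u - bt u * bt u) / 4 by rewrite h2; field.
  move=> ->; field.
case: hr3 => [E|[i E]].
  by move: hb1; rewrite E hqB; lra.
case: (Rlt_dec (P i lam) 0) => hi.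
  case: (ri_bd u hi) => E2.
    by move: hb1; rewrite E E2 hqB; lra.
  by have := hb3 i hi; rewrite E E2; lra.
have E2 : ri i u = rB u by rewrite /ri; case: Rlt_dec.
by move: hb1; rewrite E E2 hqB; lra.
Qed.

Definition gmap (u : vec n) : vec n := fun k => cc k + rho u * u k.
Definition fmap (x : vec n) : vec n :=
  fun k => (x k - cc k) * / sqrt (qform Q (fun j => x j - cc j)).

Lemma Bs_ext (x y : vec n) : (forall k, x k = y k) -> Bs x -> Bs y.
Proof. move=> H; have -> : y = x by apply: functional_extensionality => k; rewrite H. done. Qed.

Lemma Phi_ne (x : vec n) : ~ Bs x -> 0 < qform Q (fun j => x j - cc j).
Proof.
move=> hx; case: hQ => _ hpos; apply: hpos.
apply: NNPP => h; apply: hx; apply: (@Bs_ext cc); last by apply: Bs_cc.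
move=> k; apply: NNPP => hk; apply: h; exists k; lra.
Qed.

Lemma Sph_iff u : unit_sphere_Hperp alpha Q lam u <-> Sph u.
Proof.
rewrite /unit_sphere_Hperp /Sph qnorm_eq1 // -Z_Hperp; done.
Qed.

Lemma fmap_Sph x : Kset x -> ~ Bs x -> Sph (fmap x).
Proof.
move=> [hz _] hb; have hq := Phi_ne hb.
set r := sqrt (qform Q (fun j => x j - cc j)).
have hr : 0 < r by apply: sqrt_lt_R0.
have hrr : r * r = qform Q (fun j => x j - cc j) by rewrite /r sqrt_sqrt //; lra.
have E : forall k, fmap x k = / r * (x k - cc k) by move=> k; rewrite /fmap -/r; ring.
split.
  move=> i hi; rewrite (@pairing_ext _ _ (fun k => / r * (x k + (-1) * cc k))).
    rewrite pairing_scal1 P_aff P_cc hi (hz i hi); ring.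
  move=> k; rewrite E; ring.
rewrite (@qform_ext _ _ _ (fun k => / r * (x k - cc k))) // qform_scal -hrr; field; lra.
Qed.

Lemma g_f x : Kset x -> ~ Bs x -> gmap (fmap x) = x.
Proof.
move=> hk hb; have hq := Phi_ne hb.
have hS := fmap_Sph hk hb.
set r := sqrt (qform Q (fun j => x j - cc j)).
have hr : 0 < r by apply: sqrt_lt_R0.
have E : forall k, fmap x k = / r * (x k - cc k) by move=> k; rewrite /fmap -/r; ring.
have [hp _] := rho_props (fmap x).
have Er : rho (fmap x) = r.
  case: (Rtotal_order r (rho (fmap x))) => [h|[h|h]] //.
    exfalso; apply: hb; apply: (@Bs_ext (fun k => cc k + r * fmap x k)).
      by move=> k; rewrite E; field; lra.
    apply: line_B => //; lra.
  exfalso; apply: (line_notB hS).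
  apply: (@Bs_ext (fun k => x k + (1 - rho (fmap x) / r) * (cc k - x k))).
    move=> k; rewrite E; field; lra.
  apply: star => //; split.
    have : rho (fmap x) / r < 1.
      apply: (Rmult_lt_reg_r r) => //; field_simplify; lra.
    lra.
  have : 0 < rho (fmap x) / r by apply: Rdiv_lt_0_compat.
  lra.
apply: functional_extensionality => k; rewrite /gmap Er E; field; lra.
Qed.

Lemma f_g u : Sph u -> fmap (gmap u) = u.
Proof.
move=> [hz hq]; have [hp _] := rho_props u.
have E : qform Q (fun j => gmap u j - cc j) = rho u * rho u.
  rewrite (@qform_ext _ _ _ (fun j => rho u * u j)); last by move=> j; rewrite /gmap; ring.
  by rewrite qform_scal hq; ring.
apply: functional_extensionality => k; rewrite /fmap E sqrt_square; last lra.
rewrite /gmap; field; lra.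
Qed.

Lemma cont_qform_aff (b : vec n) (mu : vec n) : cont (fun y => qform Q (fun j => y j - b j)) mu.
Proof.
rewrite /qform; apply: cont_sum => k; apply: cont_sum => l.
apply: cont_mul; [apply: cont_mul; [|apply: cont_const]|]; apply: cont_sub; (apply: cont_coord || apply: cont_const).
Qed.

Lemma cont_rB u : cont rB u.
Proof.
rewrite /rB /Dd; apply: cont_scal; apply: cont_add.
  apply: cont_opp; apply: cont_beta.
apply: cont_sqrt.
  apply: cont_add; [apply: cont_mul; apply: cont_beta | apply: cont_const].
have := a0_lt; have := Rle_0_sqr (bt u); rewrite /Rsqr /bt; lra.
Qed.

Lemma cont_ri i u : cont (ri i) u.
Proof.
rewrite /ri; case: Rlt_dec => h /=; last by apply: cont_rB.
have hB := rB_pos u; have hA := Ai_pos h.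
have hq : 0 < Ai i * / rB u by apply: Rmult_lt_0_compat => //; apply: Rinv_0_lt_compat.
apply: cont_mul; first by apply: cont_const.
apply: cont_inv.
  apply: cont_max; first by apply: cont_pairing.
  apply: cont_mul; first by apply: cont_const.
  apply: cont_inv; [apply: cont_rB | lra].
have := Rmax_r (P i u) (Ai i * / rB u); lra.
Qed.

Lemma cont_rho u : cont rho u.
Proof.
rewrite /rho; elim: (index_enum 'I_d) => [|j l IH] /=; first by apply: cont_rB.
apply: cont_min => //; apply: cont_ri.
Qed.

Lemma cont_on_g : continuous_on Sph gmap.
Proof.
move=> u _ eps he.
have [del [hd H]] := @cont_vec n gmap u
  ltac:(move=> k; rewrite /gmap; apply: cont_add; [apply: cont_const|apply: cont_mul; [apply: cont_rho|apply: cont_coord]]) eps he.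
exists del; split => // y _ hy; by apply: H.
Qed.

Lemma cont_on_f : continuous_on (Phi_lam alpha Q lam) fmap.
Proof.
move=> x /Phi_iff [hk hb] eps he.
have hq := Phi_ne hb.
have [del [hd H]] := @cont_vec n fmap x
  ltac:(move=> k; rewrite /fmap; apply: cont_mul; [apply: cont_sub; [apply: cont_coord|apply: cont_const]|];
        apply: cont_inv; [apply: cont_sqrt; [apply: cont_qform_aff|lra] | have := sqrt_lt_R0 _ hq; lra]) eps he.
exists del; split => // y _ hy; by apply: H.
Qed.

Lemma main_result :
  (forall mu, Phi_lam alpha Q lam mu -> Hperp alpha lam mu) /\
  homeomorphic (Phi_lam alpha Q lam) (unit_sphere_Hperp alpha Q lam).
Proof.
split.
  by move=> mu /Phi_iff [[hz _] _]; apply/Z_Hperp.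
exists fmap, gmap; split; last split; last split; last split; last split.
- by move=> x /Phi_iff [hk hb]; apply/Sph_iff; apply: fmap_Sph.
- move=> u /Sph_iff hu; apply/Phi_iff; split; [by apply: line_K | by apply: line_notB].
- by move=> x /Phi_iff [hk hb]; apply: g_f.
- by move=> u /Sph_iff hu; apply: f_g.
- exact: cont_on_f.
- move=> u /Sph_iff hu eps he.
  have [del [hd H]] := cont_on_g hu he.
  exists del; split => // y /Sph_iff hy; by apply: H.
Qed.

End Main.

Theorem mainTheorem3 (n d : nat) (alpha : 'I_d -> 'I_n -> Z) (Q : 'I_n -> 'I_n -> R)
  (hfaith : faithful alpha) (hws : weakly_symmetric alpha) (hQ : pos_def_qform Q)
  (lam : vec n) :
  (forall mu, Phi_lam alpha Q lam mu -> Hperp alpha lam mu) /\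
  homeomorphic (Phi_lam alpha Q lam) (unit_sphere_Hperp alpha Q lam).
Proof. exact: main_result. Qed.
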